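(* Let $C_m$ denote the (unweighted) cycle on $m$ vertices. Then $\mathrm{OPT}(C_m)=m\log_2 m+O(m)$.
   Context: For a graph $G=(V,E)$ with unit edge weights, a hierarchical clustering tree (HC-tree) is a rooted tree whose leaves are in bijection with $V$; its cost is $C_G(\mathcal T)=\sum_{(u,v)\in E}|\mathrm{leaves}(\mathcal T[u\vee v])|$, where $u\vee v$ is the lowest common ancestor of $u,v$ in $\mathcal T$ and $\mathrm{leaves}(\mathcal T[z])$ is the set of leaves of the subtree rooted at $z$. $\mathrm{OPT}(G)$ is the minimum cost over all HC-trees of $G$. *)

(* Defs.v *)
From Stdlib Require Import ClassicalEpsilon.
From mathcomp Require Import all_boot.
Set Implicit Arguments. Unset Strict Implicit. Unset Printing Implicit Defensive.

Inductive hctree (T : Type) : Type :=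
| Leaf of T
| Node of seq (hctree T).
Arguments Leaf {T}. Arguments Node {T}.

Section HC.
Variable T : finType.

Fixpoint leaves (t : hctree T) : seq T :=
  match t with
  | Leaf x => [:: x]
  | Node ts => flatten (map leaves ts)
  end.

(* Every internal node has at least one child (so the leaves of the tree are
   exactly the labelled [Leaf] constructors). *)
Fixpoint wf_tree (t : hctree T) : bool :=
  match t with
  | Leaf _ => true
  | Node ts => (~~ nilp ts) && all wf_tree ts
  end.

Definition is_hctree (t : hctree T) : bool :=
  wf_tree t && perm_eq (leaves t) (enum T).

(* |leaves(T[u \/ v])| : the number of leaves of the subtree rooted at the lowest
   common ancestor of u and v (descend into a child containing both, if any). *)
Fixpoint lca_size (u v : T) (t : hctree T) : nat :=
  match t with
  | Leaf _ => 1
  | Node ts =>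
      foldr (fun c acc => if (u \in leaves c) && (v \in leaves c)
                          then lca_size u v c else acc)
            (size (flatten (map leaves ts))) ts
  end.

(* A (simple, undirected) graph on T is a symmetric irreflexive relation e;
   each undirected edge {u,v} is counted once (u before v in enum order). *)
Definition hc_cost (e : rel T) (t : hctree T) : nat :=
  \sum_(u : T) \sum_(v : T | (enum_rank u < enum_rank v) && e u v) lca_size u v t.

(* OPT(G) = min cost over all HC-trees (0 by convention if none exists,
   i.e. only when T is empty). *)
Definition opt_pred (e : rel T) (k : nat) : bool :=
  if excluded_middle_informative (exists t, is_hctree t /\ hc_cost e t = k)
  then true else false.

Definition OPT (e : rel T) : nat :=
  match excluded_middle_informative (exists k, opt_pred e k) with
  | left H => ex_minn H
  | right _ => 0
  end.
End HC.

Definition cycle_rel (m : nat) : rel 'I_m :=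
  fun i j => (i != j) && ((j == (i.+1 %% m) :> nat) || (i == (j.+1 %% m) :> nat)).

(* Main.v *)
Require Import Defs.
From mathcomp Require Import all_boot.
From mathcomp Require Import zify.
From Stdlib Require Import Reals Lra Classical ClassicalEpsilon.
Set Implicit Arguments. Unset Strict Implicit. Unset Printing Implicit Defensive.



Fixpoint tind (T : Type) (P : hctree T -> Prop) (HL : forall x, P (Leaf x))
  (HN : forall ts, (forall c, List.In c ts -> P c) -> P (Node ts)) (t : hctree T) : P t :=
  match t with
  | Leaf x => HL x
  | Node ts => HN ts ((fix go (ts : seq (hctree T)) : forall c, List.In c ts -> P c :=
       match ts with
       | [::] => fun c H => False_ind _ H
       | c0 :: ts' => fun c H =>
           match H with
           | or_introl E => eq_ind c0 P (tind HL HN c0) c E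
           | or_intror H' => go ts' c H'
           end
       end) ts)
  end.

Section X.
End X.

Definition lcaF (T : finType) (u v : T) (c : hctree T) (acc : nat) :=
  if (u \in leaves c) && (v \in leaves c) then lca_size u v c else acc.

Lemma lca_NodeE (T : finType) (u v : T) ts :
  lca_size u v (Node ts) = foldr (lcaF u v) (size (flatten (map (@leaves T) ts))) ts.
Proof. by []. Qed.

Lemma In_flatten (T : finType) (x : T) ts c :
  List.In c ts -> x \in leaves c -> x \in flatten (map (@leaves T) ts).
Proof.
elim: ts => [|c0 ts IH] //= [->|H] Hx; rewrite mem_cat ?Hx //.
by rewrite IH ?orbT.
Qed.

Lemma foldr_in (T : finType) (u v : T) ts c acc :
  uniq (flatten (map (@leaves T) ts)) -> List.In c ts ->
  u \in leaves c -> v \in leaves c -> foldr (lcaF u v) acc ts = lca_size u v c.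
Proof.
elim: ts => [|c0 ts IH] //= Hu [<-|Hin] Huc Hvc; first by rewrite /lcaF Huc Hvc.
move: Hu; rewrite cat_uniq => /and3P[_ Hdis Hu'].
have Hno : u \notin leaves c0.
  apply/negP=> H0; move/hasPn: Hdis => /(_ u).
  by rewrite (In_flatten Hin Huc) H0 => /(_ isT).
by rewrite /lcaF (negbTE Hno) /= IH.
Qed.

Lemma foldr_none (T : finType) (u v : T) ts acc :
  (forall c, List.In c ts -> ~~ ((u \in leaves c) && (v \in leaves c))) ->
  foldr (lcaF u v) acc ts = acc.
Proof.
elim: ts => [|c0 ts IH] //= H; rewrite /lcaF (negbTE (H c0 (or_introl erefl))).
by apply: IH => c Hc; apply: H; right.
Qed.

Lemma in_flatten_In (T : finType) (x : T) ts :
  x \in flatten (map (@leaves T) ts) -> exists c, List.In c ts /\ x \in leaves c.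
Proof.
elim: ts => [|c0 ts IH] //=; rewrite mem_cat => /orP[H|H]; first by exists c0; split => //; left.
by have [c [H1 H2]] := IH H; exists c; split => //; right.
Qed.

Lemma In_uniq (T : finType) (x : T) ts c1 c2 :
  uniq (flatten (map (@leaves T) ts)) -> List.In c1 ts -> List.In c2 ts ->
  x \in leaves c1 -> x \in leaves c2 -> leaves c1 = leaves c2.
Proof.
elim: ts => [|c0 ts IH] //=; rewrite cat_uniq => /and3P[_ Hdis Hu] H1 H2 Hx1 Hx2.
have Hc : forall c, List.In c ts -> x \in leaves c -> x \notin leaves c0.
  move=> c Hc Hxc; apply/negP => Hx0; move/hasPn: Hdis => /(_ x).
  by rewrite (In_flatten Hc Hxc) Hx0 => /(_ isT).
case: H1 => [E1|H1]; case: H2 => [E2|H2].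
- by rewrite -E1 -E2.
- by subst c1; move: (Hc _ H2 Hx2); rewrite Hx1.
- by subst c2; move: (Hc _ H1 Hx1); rewrite Hx2.
- exact: IH.
Qed.

Lemma lca_le_size (T : finType) (u v : T) t : lca_size u v t <= size (leaves t).
Proof.
elim/tind: t => [x|ts IH] //.
rewrite lca_NodeE /=.
suff H : forall acc, foldr (lcaF u v) acc ts <= maxn acc (size (flatten (map (@leaves T) ts))).
  by have := H (size (flatten (map (@leaves T) ts))); rewrite maxnn.
elim: ts IH => [|c0 ts IHs] IH acc /=; first by rewrite maxn0.
rewrite /lcaF; case: ifP => _.
  apply: leq_trans (IH c0 (or_introl erefl)) _; rewrite size_cat; lia.
apply: leq_trans (IHs (fun c H => IH c (or_intror H)) acc) _; rewrite size_cat; lia.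
Qed.


Definition flog (n : nat) : R := (INR n * (ln (INR n) / ln 2))%R.

Lemma ln_le_m1 (y : R) : (0 < y)%R -> (ln y <= y - 1)%R.
Proof. move=> Hy; have := exp_ineq1_le (ln y); rewrite exp_ln //; lra. Qed.

Lemma ln2_pos : (0 < ln 2)%R.
Proof. rewrite -ln_1; apply: ln_increasing; lra. Qed.

Lemma flog_split (a b : nat) : 0 < a -> 0 < b ->
  (flog (a + b) <= flog a + flog b + INR (a + b))%R.
Proof.
move=> Ha Hb; rewrite /flog plus_INR.
have HA : (0 < INR a)%R by apply: lt_0_INR; apply/ltP.
have HB : (0 < INR b)%R by apply: lt_0_INR; apply/ltP.
set A := INR a in HA *; set B := INR b in HB *.
have H2 := ln2_pos.
have key : forall X, (0 < X)%R -> (X * (ln (A + B) - ln 2 - ln X) <= (A + B) / 2 - X)%R.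
  move=> X HX.
  have E : ln ((A + B) / (2 * X)) = (ln (A + B) - ln 2 - ln X)%R.
    rewrite /Rdiv ln_mult ?ln_Rinv ?ln_mult; try lra; try nra.
    by apply: Rinv_0_lt_compat; nra.
  rewrite -E.
  have := ln_le_m1 (y := ((A + B) / (2 * X))%R).
  have P : (0 < (A + B) / (2 * X))%R by apply: Rdiv_lt_0_compat; lra.
  move=> /(_ P) HL.
  have : (X * ln ((A + B) / (2 * X)) <= X * ((A + B) / (2 * X) - 1))%R.
    by apply: Rmult_le_compat_l; lra.
  have -> : (X * ((A + B) / (2 * X) - 1) = (A + B) / 2 - X)%R by field; lra.
  done.
have K1 := key A HA; have K2 := key B HB.
apply: (Rmult_le_reg_r (ln 2)) => //.
have -> : ((A + B) * (ln (A + B) / ln 2) * ln 2 = (A + B) * ln (A + B))%R by field; lra.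
have -> : ((A * (ln A / ln 2) + B * (ln B / ln 2) + (A + B)) * ln 2 =
   A * ln A + B * ln B + (A + B) * ln 2)%R by field; lra.
nra.
Qed.


Definition gE (M : nat) (t : hctree 'I_M.+1) k := lca_size (inord k) (inord k.+1) t.
Definition pcost (M : nat) (t : hctree 'I_M.+1) l n := \sum_(l <= k < (l + n).-1) gE t k.

Lemma flog_small n : n <= 1 -> flog n = 0%R.
Proof. by case: n => [|[|]] //= _; rewrite /flog /= ?ln_1; lra. Qed.

Lemma uniq_child (T : finType) ts c :
  uniq (flatten (map (@leaves T) ts)) -> List.In c ts -> uniq (leaves c).
Proof.
elim: ts => [|c0 ts IH] //=; rewrite cat_uniq => /and3P[H0 _ H1] [<-|H] //.
exact: IH.
Qed.

Lemma inord_inj M i j : i < M.+1 -> j < M.+1 -> (inord i : 'I_M.+1) = inord j -> i = j.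
Proof. by move=> Hi Hj E; rewrite -(inordK Hi) -(inordK Hj) E. Qed.

Lemma lower M (t : hctree 'I_M.+1) : uniq (leaves t) -> forall n l, l + n <= M.+1 ->
  (forall k, l <= k < l + n -> inord k \in leaves t) -> (flog n <= INR (pcost t l n))%R.
Proof.
elim/tind: t => [x|ts IH] Hu n l Hm Hin.
  case: (leqP n 1) => Hn; first by rewrite flog_small //; apply: pos_INR.
  have H1 := Hin l; have H2 := Hin l.+1.
  rewrite /= !inE in H1 H2.
  have E : (inord l : 'I_M.+1) = inord l.+1.
    by rewrite (eqP (H1 _)) ?(eqP (H2 _)) //; lia.
  by have := inord_inj _ _ E; lia.
have Hu' : uniq (flatten (map (@leaves _) ts)) by [].
elim: n.+1 {-2}n (ltnSn n) l Hm Hin => // N IHN {}n Hn l Hm Hin.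
case: (leqP n 1) => Hn1; first by rewrite flog_small //; apply: pos_INR.
have Hinf : forall k, l <= k < l + n -> inord k \in flatten (map (@leaves _) ts) by [].
case: (classic (exists c, List.In c ts /\ forall k, l <= k < l + n -> inord k \in leaves c)).
  move=> [c [Hc Hck]].
  have := IH c Hc (uniq_child Hu' Hc) n l Hm Hck.
  have -> : pcost (Node ts) l n = pcost c l n.
    rewrite /pcost; apply: eq_big_nat => k Hk.
    by rewrite /gE lca_NodeE (foldr_in _ Hu' Hc) //; apply: Hck; lia.
  done.
move=> Hnot.
have [c0 [Hc0 Hl0]] := in_flatten_In (Hinf l ltac:(lia)).
have [i [Hi [Hi1 Hi2]]] : exists i, l < i < l + n /\ inord i.-1 \in leaves c0 /\
    inord i \notin leaves c0.
  apply: NNPP => Hno; apply: Hnot; exists c0; split => //.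
  suff S : forall j, j < n -> inord (l + j) \in leaves c0.
    move=> k Hk; have := S (k - l) ltac:(lia).
    by have -> : l + (k - l) = k by lia.
  elim=> [|j IHj] Hj; first by rewrite addn0.
  case: (boolP (inord (l + j.+1) \in leaves c0)) => // Hb.
  exfalso; apply: Hno; exists (l + j.+1); split; first by lia.
  split => //; have -> : (l + j.+1).-1 = l + j by lia.
  by apply: IHj; lia.
have Hg : gE (Node ts) i.-1 = size (flatten (map (@leaves _) ts)).
  rewrite /gE lca_NodeE foldr_none // => c Hc; apply/negP => /andP[Ha Hb].
  have E := In_uniq Hu' Hc Hc0 Ha Hi1.
  move: Hi2 Hb; rewrite -E; have -> : i.-1.+1 = i by lia.
  by move=> /negP.
have Hsz : n <= size (flatten (map (@leaves _) ts)).
  have <- : size (map (fun k => (inord k : 'I_M.+1)) (iota l n)) = n by rewrite size_map size_iota.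
  apply: uniq_leq_size.
    rewrite map_inj_in_uniq ?iota_uniq // => a b; rewrite !mem_iota => Ha Hb E.
    by apply: (inord_inj _ _ E); lia.
  by move=> x /mapP [k]; rewrite mem_iota => Hk ->; apply: Hinf.
have Hsplit : pcost (Node ts) l n =
    pcost (Node ts) l (i - l) + gE (Node ts) i.-1 + pcost (Node ts) i (l + n - i).
  rewrite /pcost.
  have -> : (l + (i - l)).-1 = i.-1 by lia.
  have -> : (i + (l + n - i)).-1 = (l + n).-1 by lia.
  rewrite (@big_cat_nat _ _ _ i.-1) /=; try lia.
  rewrite (@big_ltn _ _ _ i.-1) /=; last by lia.
  have -> : i.-1.+1 = i by lia.
  by rewrite addnA.
have L1 := IHN (i - l) ltac:(lia) l ltac:(lia) ltac:(move=> k Hk; apply: Hin; lia).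
have L2 := IHN (l + n - i) ltac:(lia) i ltac:(lia) ltac:(move=> k Hk; apply: Hin; lia).
have F := flog_split (a := i - l) (b := l + n - i) ltac:(lia) ltac:(lia).
rewrite (_ : i - l + (l + n - i) = n) in F; last by lia.
rewrite Hsplit !plus_INR.
have : (INR n <= INR (gE (Node ts) i.-1))%R by rewrite Hg; apply: le_INR; apply/leP.
lra.
Qed.


Fixpoint bt (M f l n : nat) : hctree 'I_M.+1 :=
  match f with
  | 0 => Leaf (inord l)
  | f'.+1 => if n <= 1 then Leaf (inord l)
             else Node [:: bt M f' l (n %/ 2); bt M f' (l + n %/ 2) (n - n %/ 2)]
  end.

Lemma bt_wf M f l n : wf_tree (bt M f l n).
Proof.
elim: f l n => [|f IH] l n //=; case: ifP => //= _; by rewrite !IH.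
Qed.

Lemma leaves_Node2 (T : finType) (a b : hctree T) :
  leaves (Node [:: a; b]) = leaves a ++ leaves b.
Proof. by rewrite /= cats0. Qed.

Lemma bt_leaves M f l n : 0 < n -> n <= f ->
  leaves (bt M f l n) = map inord (iota l n).
Proof.
elim: f l n => [|f IH] l n Hn Hf /=; first lia.
case: ifP => Hn1.
  by have -> : n = 1 by lia.
rewrite leaves_Node2 !IH; try lia.
by rewrite -map_cat -iotaD; congr (map _ (iota _ _)); lia.
Qed.

Lemma mem_map_inord M l n k : l + n <= M.+1 -> k < M.+1 ->
  ((inord k : 'I_M.+1) \in map inord (iota l n)) = (l <= k < l + n).
Proof.
move=> Hm Hk; apply/mapP/idP.
  move=> [j]; rewrite mem_iota => Hj E; have := inord_inj _ _ E.
  by move=> ->; lia.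
by move=> H; exists k; rewrite ?mem_iota.
Qed.

Lemma bt_cost M f l n e : 0 < n -> n <= f -> l + n <= M.+1 -> n <= expn 2 e ->
  pcost (bt M f l n) l n <= n * e.
Proof.
elim: f l n e => [|f IH] l n e Hn Hf Hm He; first lia.
rewrite /pcost /=; case: ifP => Hn1.
  by rewrite big_geq //; lia.
case: e He => [|e] He; first by rewrite expn0 in He; lia.
rewrite expnS in He.
set h := n %/ 2.
have Hh1 : 0 < h by rewrite /h; lia.
have Hh2 : h < n by rewrite /h; lia.
have HP1 : h <= expn 2 e by rewrite /h; lia.
have HP2 : n - h <= expn 2 e by rewrite /h; lia.
set t1 := bt M f l h; set t2 := bt M f (l + h) (n - h).
have I1 : pcost t1 l h <= h * e := IH l h e Hh1 ltac:(lia) ltac:(lia) HP1.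
have I2 : pcost t2 (l + h) (n - h) <= (n - h) * e := IH (l + h) (n - h) e ltac:(lia) ltac:(lia) ltac:(lia) HP2.
have Lt1 : leaves t1 = map inord (iota l h) by rewrite bt_leaves //; lia.
have Lt2 : leaves t2 = map inord (iota (l + h) (n - h)) by rewrite bt_leaves //; lia.
clearbody t1 t2 h; clear IH He Hf HP1 HP2 Hn1.
have Hu : uniq (leaves (Node [:: t1; t2])).
  rewrite leaves_Node2 Lt1 Lt2 -map_cat -iotaD map_inj_in_uniq ?iota_uniq // => a b.
  by rewrite !mem_iota => Ha Hb E; apply: (inord_inj _ _ E); lia.
rewrite (@big_cat_nat _ _ _ (l + h).-1); try lia.
rewrite (@big_ltn _ _ _ (l + h).-1); last by lia.
have -> : (l + h).-1.+1 = l + h by lia.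
have E1 : \sum_(l <= k < (l + h).-1) gE (Node [:: t1; t2]) k = pcost t1 l h.
  apply: eq_big_nat => k Hk; rewrite /gE lca_NodeE (foldr_in _ Hu (or_introl erefl)) //.
    by rewrite Lt1 mem_map_inord; lia.
  by rewrite Lt1 mem_map_inord; lia.
have E2 : \sum_(l + h <= k < (l + n).-1) gE (Node [:: t1; t2]) k = pcost t2 (l + h) (n - h).
  rewrite /pcost (_ : (l + h + (n - h)).-1 = (l + n).-1); last by lia.
  apply: eq_big_nat => k Hk; rewrite /gE lca_NodeE.
  rewrite [foldr _ _ _]/= {1}/lcaF Lt1 mem_map_inord; try lia.
  rewrite (_ : (l <= k < l + h) = false); last by lia.
  rewrite andFb /lcaF Lt2 !mem_map_inord; try lia.
  rewrite (_ : (l + h <= k < l + h + (n - h)) = true); last by lia.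
  by rewrite (_ : (l + h <= k.+1 < l + h + (n - h)) = true); last by lia.
have E3 : gE (Node [:: t1; t2]) (l + h).-1 = n.
  rewrite /gE lca_NodeE foldr_none.
    by change (size (leaves (Node [:: t1; t2])) = n); rewrite leaves_Node2 Lt1 Lt2 size_cat !size_map !size_iota; lia.
  move=> c [<-|[<-|[]]]; rewrite ?Lt1 ?Lt2 !mem_map_inord; lia.
rewrite E1 E2 E3.
change (pcost t1 l h + (n + pcost t2 (l + h) (n - h)) <= n * e.+1).

have Hmul : h * e + (n - h) * e = n * e by rewrite -mulnDl subnKC // ltnW.
rewrite mulnS; move: I1 I2 Hmul.
move: (h * e) ((n - h) * e) (n * e) (pcost t1 l h) (pcost t2 (l + h) (n - h)) => A B C D F.
lia.
Qed.


Lemma sum_eq1 n a (G : nat -> nat) :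
  \sum_(v < n) (if nat_of_ord v == a then G (nat_of_ord v) else 0) = if a < n then G a else 0.
Proof.
rewrite -(big_mkord xpredT (fun v => if v == a then G v else 0)).
elim: n => [|n IH]; first by rewrite big_geq.
rewrite big_nat_recr //= IH.
case: (ltngtP a n) => H /=.
- by rewrite ifT ?addn0 //; lia.
- by rewrite ifF ?addn0 //; lia.
- by subst; rewrite ltnSn.
Qed.

Lemma sum_path M (t : hctree 'I_M.+1) :
  \sum_(0 <= k < M) gE t k = \sum_(u < M.+1) (if u.+1 < M.+1 then gE t u else 0).
Proof.
rewrite big_ord_recr /= ltnn addn0 -(big_mkord xpredT (fun u => if u.+1 < M.+1 then gE t u else 0)).
by apply: eq_big_nat => k Hk; rewrite ifT //; lia.
Qed.

Lemma hc_lower M (t : hctree 'I_M.+1) :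
  \sum_(0 <= k < M) gE t k <= hc_cost (@cycle_rel M.+1) t.
Proof.
rewrite sum_path /hc_cost; apply: leq_sum => u _.
case: ifP => Hu //.
have Hlt : u.+1 < M.+1 by [].
rewrite (bigD1 (inord u.+1)) /=.
  by rewrite /gE inord_val leq_addr.
apply/andP; split.
  by rewrite !enum_rank_ord /= inordK.
rewrite /cycle_rel; apply/andP; split.
  by apply/eqP => /(congr1 (@nat_of_ord _)); rewrite inordK //; lia.
by rewrite inordK // modn_small // eqxx.
Qed.

Lemma hc_upper M (t : hctree 'I_M.+1) :
  hc_cost (@cycle_rel M.+1) t <= \sum_(0 <= k < M) gE t k + size (leaves t).
Proof.
rewrite /hc_cost.
apply: (@leq_trans (\sum_(u < M.+1) ((if u.+1 < M.+1 then gE t u else 0) +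
    (if nat_of_ord u == 0 then size (leaves t) else 0)))); last first.
  rewrite big_split /= sum_path leq_add2l.
  by rewrite (sum_eq1 _ _ (fun _ => size (leaves t))).
apply: leq_sum => u _.
rewrite big_mkcond /=.
apply: (@leq_trans (\sum_(v < M.+1) ((if nat_of_ord v == u.+1 then lca_size u (inord (nat_of_ord v)) t else 0) +
    (if (nat_of_ord u == 0) && (nat_of_ord v == M) then size (leaves t) else 0)))).
  apply: leq_sum => v _; case: ifP => // /andP [Hr Hc].
  move: Hr Hc; rewrite !enum_rank_ord /= /cycle_rel => Hr /andP[_ /orP[/eqP E|/eqP E]];
    have Hv := ltn_ord v; have Hu' := ltn_ord u.
    have Ev : nat_of_ord v = u.+1 by move: E; rewrite modn_small; lia.
    by rewrite Ev eqxx -Ev inord_val leq_addr.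
  have Ev : (nat_of_ord u == 0) && (nat_of_ord v == M).
    case: (ltnP v.+1 M.+1) => H.
      by move: E; rewrite modn_small //; lia.
    by move: E; rewrite (_ : v.+1 = M.+1) ?modnn; lia.
  by rewrite Ev; apply: leq_trans (lca_le_size u v t) (leq_addl _ _).
rewrite big_split /= (sum_eq1 _ _ (fun k => lca_size u (inord k) t)).
apply: leq_add.
  by case: ifP => //; rewrite /gE inord_val.
case: (nat_of_ord u == 0) => /=.
  by rewrite (sum_eq1 _ _ (fun _ => size (leaves t))) ltnSn.
by rewrite big1.
Qed.


Lemma OPT_le (T : finType) (e : rel T) t : is_hctree t -> OPT e <= hc_cost e t.
Proof.
move=> Ht.
have Hp : opt_pred e (hc_cost e t).
  rewrite /opt_pred; case: excluded_middle_informative => // H.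
  by exfalso; apply: H; exists t.
rewrite /OPT; case: excluded_middle_informative => [H|H].
  by case: ex_minnP => k _ Hmin; apply: Hmin.
by exfalso; apply: H; exists (hc_cost e t).
Qed.

Lemma OPT_attained (T : finType) (e : rel T) (t0 : hctree T) : is_hctree t0 ->
  exists t : hctree T, is_hctree t /\ hc_cost e t = OPT e.
Proof.
move=> Ht0.
rewrite /OPT; case: excluded_middle_informative => [H|H].
  case: ex_minnP => k Hk _; move: Hk; rewrite /opt_pred.
  by case: excluded_middle_informative.
exfalso; apply: H; exists (hc_cost e t0); rewrite /opt_pred.
case: excluded_middle_informative => // H; exfalso; apply: H; by exists t0.
Qed.

Lemma enum_ord_inord M : enum 'I_M.+1 = map inord (iota 0 M.+1).
Proof.
rewrite -val_enum_ord -map_comp -[LHS]map_id; apply: eq_map => i /=.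
by rewrite inord_val.
Qed.

Lemma INR_expn2 k : INR (expn 2 k) = (2 ^ k)%R.
Proof.
elim: k => [|k IH]; first by rewrite expn0 /=.
by rewrite expnS -multE mult_INR IH /=.
Qed.

Open Scope R_scope.

Theorem lemma2p4 :
  exists (c : R) (N : nat), forall m : nat, (N <= m)%nat ->
    Rabs (INR (OPT (@cycle_rel m)) - INR m * (ln (INR m) / ln 2)) <= c * INR m.
Proof.
exists 2%R, 2%nat => m Hm.
case: m Hm => [|M] Hm; first by [].
set t0 := bt M M.+1 0 M.+1.
have Lt0 : leaves t0 = map inord (iota 0 M.+1) by rewrite bt_leaves.
have Ht0 : is_hctree t0 by rewrite /is_hctree bt_wf Lt0 enum_ord_inord perm_refl.
have [t [Ht Hc]] := OPT_attained (@cycle_rel M.+1) Ht0.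
have L : flog M.+1 <= INR (OPT (@cycle_rel M.+1)).
  rewrite -Hc; move: Ht => /andP[_ Hp].
  have Hu : uniq (leaves t) by rewrite (perm_uniq Hp) enum_uniq.
  have := @lower M t Hu M.+1 0 (leqnn _) (fun k _ => ltac:(by rewrite (perm_mem Hp) mem_enum)).
  move=> H; apply: (Rle_trans _ _ _ H); apply: le_INR; apply/leP.
  by rewrite /pcost add0n /=; apply: hc_lower.
set e := up_log 2 M.+1.
have U : (OPT (@cycle_rel M.+1) <= M.+1 * e + M.+1)%nat.
  apply: leq_trans (OPT_le _ Ht0) _; apply: leq_trans (hc_upper t0) _.
  rewrite Lt0 size_map size_iota leq_add2r.
  have := @bt_cost M M.+1 0 M.+1 e isT (leqnn _) (leqnn _) (@up_logP 2 M.+1 isT).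
  by rewrite /pcost add0n.
have He1 : (0 < e)%nat by rewrite /e up_log_gt0.
have Hgt : (expn 2 e.-1 < M.+1)%nat by apply: up_log_gtn.
have H2 := ln2_pos.
have HX : 0 < INR M.+1 by apply: lt_0_INR; lia.
have Hln : INR e.-1 * ln 2 < ln (INR M.+1).
  rewrite -ln_pow; last lra.
  apply: ln_increasing; first by apply: pow_lt; lra.
  by rewrite -INR_expn2; apply: lt_INR; apply/ltP.
have Ee : INR e = INR e.-1 + 1 by rewrite -S_INR; congr INR; lia.
have UR : INR (OPT (@cycle_rel M.+1)) <= INR M.+1 * INR e + INR M.+1.
  by rewrite -mult_INR -plus_INR; apply: le_INR; apply/leP.
have Hq : INR e.-1 <= ln (INR M.+1) / ln 2.
  apply: Rlt_le; apply: (Rmult_lt_reg_r (ln 2)) => //.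
  by rewrite /Rdiv Rmult_assoc Rinv_l ?Rmult_1_r; lra.
have Hq2 : INR M.+1 * INR e.-1 <= INR M.+1 * (ln (INR M.+1) / ln 2).
  by apply: Rmult_le_compat_l; lra.
rewrite /flog in L.
apply: Rabs_le; split; nra.
Qed.
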